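(* Let $f\colon\mathbb{N}\to\mathbb{N}$ be a growth function, $d$ a positive integer, and $\psi=\psi_{d,f}$. If $(N_1,\dots,N_d),(M_1,\dots,M_d)\in\mathbb{N}^d$ satisfy $\sum_iN_i\le\sum_iM_i$ and $(N_1,\dots,N_d)\le(M_1,\dots,M_d)$ in the inverse lexicographic order, then $\psi(N_1,\dots,N_d)\le\psi(M_1,\dots,M_d)$.
   Context: A growth function is a non-decreasing $f\colon\mathbb{N}\to\mathbb{N}$ with $f(r)\ge r$ for all $r$ ($\mathbb{N}$ includes $0$). Inverse lexicographic order on $\mathbb{N}^d$: $\vec N<\vec M$ if at the largest index $j$ with $N_j\ne M_j$ one has $N_j<M_j$. $\psi_{d,f}\colon\mathbb{N}^d\to\mathbb{N}$ is defined recursively: $\psi_{d,f}(M_1,0,\dots,0)=M_1$; otherwise, if $\ell\ge2$ is the smallest index with $M_\ell>0$, $\psi_{d,f}(M_1,\dots,M_d)=\psi_{d,f}(M_1,\dots,M_{\ell-1}+f(\sum_iM_i),M_\ell-1,M_{\ell+1},\dots,M_d)$. *)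

(* Defs.v *)
(* vectors in N^d are lists [:: M_1; ...; M_d]
   of naturals of size d; coordinate i (1-based in the paper) is nth 0 M (i-1). *)
From Stdlib Require Import Wf_nat.
From mathcomp Require Import all_boot.
Set Implicit Arguments. Unset Strict Implicit. Unset Printing Implicit Defensive.

Definition growth (f : nat -> nat) : Prop :=
  (forall m n, m <= n -> f m <= f n) /\ (forall r, r <= f r).

Definition invlex_lt (N M : seq nat) : Prop :=
  size N = size M /\
  exists j, [/\ j < size M, nth 0 N j < nth 0 M j &
                forall i, j < i < size M -> nth 0 N i = nth 0 M i].

Definition invlex_le (N M : seq nat) : Prop := N = M \/ invlex_lt N M.

Definition terminal (M : seq nat) : bool := all (fun x => x == 0) (behead M).

(* one step of the recursion: l (0-based) is the smallest index >= 1 with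
   M_l > 0; M_{l-1} += f (sum M), M_l -= 1 *)
Definition psi_step (f : nat -> nat) (M : seq nat) : seq nat :=
  let l := (find (fun x => x != 0) (behead M)).+1 in
  set_nth 0 (set_nth 0 M l.-1 (nth 0 M l.-1 + f (sumn M))) l (nth 0 M l).-1.

Lemma invlex_lt_rcons (s s' : seq nat) a a' :
  invlex_lt (rcons s' a') (rcons s a) ->
  a' < a \/ (a' = a /\ invlex_lt s' s).
Proof.
move=> [Hs0 [j [Hj Hlt Heq]]].
move/eqP: Hs0; rewrite !size_rcons eqSS => /eqP Hs.
move: Hj Hlt Heq; rewrite size_rcons ltnS leq_eqVlt => /orP[/eqP Ej|Hj].
  by rewrite !nth_rcons Ej Hs ltnn eqxx => Hlt _; left.
move=> Hlt Heq; right.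
have Ea : a' = a.
  have := Heq (size s); rewrite ltnSn Hj !nth_rcons Hs ltnn eqxx.
  by move=> /(_ isT).
split=> //; split=> //; exists j; split=> //.
  by move: Hlt; rewrite !nth_rcons Hs Hj.
move=> i /andP[Hji Hin]; have := Heq i.
rewrite Hji (ltn_trans Hin (ltnSn _)) !nth_rcons Hs Hin.
by move=> /(_ isT).
Qed.

Lemma invlex_lt_size (N M : seq nat) : invlex_lt N M -> size N = size M.
Proof. by case. Qed.

Lemma invlex_lt_wf : well_founded invlex_lt.
Proof.
have H : forall n M, size M = n -> Acc invlex_lt M.
  elim=> [|n IH] M.
    move/size0nil=> ->; constructor=> M' [_ [j [] ]]; by [].
  case/lastP: M => [//|s a]; rewrite size_rcons => -[Hs].
move: a s Hs; apply: (@well_founded_ind nat lt Wf_nat.lt_wf) => a IHa s Hs.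
  have As := IH s Hs.
  elim: As Hs => {}s _ IHs Hs.
  constructor=> M' HM'.
  have := invlex_lt_size HM'; case/lastP: M' HM' => [|s' a'].
    by rewrite size_rcons.
  rewrite !size_rcons => HM' [Hs']; case: (invlex_lt_rcons HM') => [Ha|[Ea Hss]].
    by apply: IHa; [apply/ltP | rewrite Hs'].
  rewrite Ea; apply: IHs; [exact: Hss | by rewrite Hs'].
apply: (fun M => H (size M) M erefl).
Qed.

Lemma psi_step_lt (f : nat -> nat) (M : seq nat) :
  terminal M = false -> invlex_lt (psi_step f M) M.
Proof.
move=> HT.
have Hh : has (fun x => x != 0) (behead M).
  by apply/hasP; move/negbT/allPn: HT => [x Hx /= Hx0]; exists x.
set k := find (fun x => x != 0) (behead M).
have Hk : k < size (behead M) by rewrite -has_find.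
have Hnz : nth 0 M k.+1 != 0 by rewrite -nth_behead; exact: (nth_find 0 Hh).
have HkM : k.+1 < size M by move: Hk; rewrite size_behead; case: (size M).
rewrite /psi_step -/k /=.
split.
  rewrite !size_set_nth (maxn_idPr (ltnW HkM)); exact: (maxn_idPr HkM).
exists k.+1; split=> //.
  by rewrite nth_set_nth /= eqxx prednK ?lt0n // ltnSn.
move=> i /andP[Hki HiM].
have H1 : i != k.+1 by rewrite neq_ltn Hki orbT.
have H2 : i != k by rewrite neq_ltn (ltn_trans (ltnSn k) Hki) orbT.
by rewrite nth_set_nth /= (negbTE H1) nth_set_nth /= (negbTE H2).
Qed.

Definition psi_G (f : nat -> nat) (M : seq nat)
  (rec : forall M', invlex_lt M' M -> nat) (b : bool) (e : terminal M = b) : nat :=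
  (if b as b' return terminal M = b' -> nat
   then fun _ => head 0 M
   else fun H => rec (psi_step f M) (psi_step_lt f H)) e.

Definition psi_F (f : nat -> nat) (M : seq nat)
  (rec : forall M', invlex_lt M' M -> nat) : nat :=
  psi_G f rec erefl.

Definition psi (f : nat -> nat) (M : seq nat) : nat :=
  Fix invlex_lt_wf (fun _ => nat) (psi_F f) M.

Lemma psiE (f : nat -> nat) (M : seq nat) :
  psi f M = if terminal M then head 0 M else psi f (psi_step f M).
Proof.
rewrite /psi Fix_eq /psi_F.
  have K : forall b (e : terminal M = b),
     psi_G f (fun y _ => Fix invlex_lt_wf (fun _ => nat) (psi_F f) y) e =
     if b then head 0 M else Fix invlex_lt_wf (fun _ => nat) (psi_F f) (psi_step f M).
    by case.
  exact: K.
move=> x g h Hgh; rewrite /psi_F.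
have K : forall b (e : terminal x = b), psi_G f g e = psi_G f h e.
  by case=> e //=; apply: Hgh.
exact: K.
Qed.

(* Main.v *)
Require Import Defs.
From mathcomp Require Import all_boot zify.


Definition kM (M : seq nat) := find (fun x => x != 0) (behead M).

Lemma nth_step f M i : nth 0 (psi_step f M) i =
  if i == (kM M).+1 then (nth 0 M (kM M).+1).-1
  else if i == kM M then nth 0 M (kM M) + f (sumn M) else nth 0 M i.
Proof. rewrite /psi_step /= nth_set_nth /= /kM; case: ifP => // _; by rewrite nth_set_nth. Qed.

Lemma sumn_nth s : sumn s = \sum_(0 <= i < size s) nth 0 s i.
Proof.
elim: s => [|a s IH] /=; first by rewrite big_geq.
by rewrite big_ltn // big_add1 /= IH.
Qed.

Lemma nt_facts M : terminal M = false ->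
  [/\ (kM M).+1 < size M, nth 0 M (kM M).+1 != 0 &
      forall i, 0 < i <= kM M -> nth 0 M i = 0].
Proof.
move=> HT.
have Hh : has (fun x => x != 0) (behead M).
  by apply/hasP; move/negbT/allPn: HT => [x Hx /= Hx0]; exists x.
have Hk : kM M < size (behead M) by rewrite -has_find.
split.
- by move: Hk; rewrite size_behead; case: (size M).
- by rewrite -nth_behead; exact: (nth_find 0 Hh).
- move=> [|i] // /andP[_ Hi]; rewrite -nth_behead.
  by apply/eqP; move: (before_find 0 Hi) => /negbFE.
Qed.

Lemma size_step f M : terminal M = false -> size (psi_step f M) = size M.
Proof.
move=> /nt_facts [H _ _]; rewrite /psi_step /= !size_set_nth.
rewrite (maxn_idPr (ltnW H)); exact: (maxn_idPr H).
Qed.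

Lemma sum_step f M : terminal M = false ->
  sumn (psi_step f M) = sumn M + f (sumn M) - 1.
Proof.
move=> /nt_facts [H1 H2 _]; rewrite /psi_step /= !sumn_set_nth0 /=.
rewrite nth_set_nth /= eqn_leq ltnn /=. rewrite -/(kM M); move: H2; lia.
Qed.

Lemma nth_le_sumn s i : nth 0 s i <= sumn s.
Proof. elim: s i => [|a s IH] [|i] //=; [exact: leq_addr | exact: leq_trans (IH i) (leq_addl _ _)]. Qed.

Lemma split3 s k : k.+1 < size s ->
  sumn s = \sum_(0 <= i < k) nth 0 s i + nth 0 s k + nth 0 s k.+1
           + \sum_(k.+2 <= i < size s) nth 0 s i.
Proof.
move=> H; rewrite sumn_nth [LHS](@big_cat_nat _ _ _ k) //=; last lia.
rewrite [\sum_(k <= i < size s) _]big_ltn; last lia.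
rewrite [\sum_(k.+1 <= i < size s) _]big_ltn; last lia.
by rewrite !addnA.
Qed.

Lemma sum_zeros s k : (forall i, 0 < i <= k -> nth 0 s i = 0) ->
  \sum_(0 <= i < k) nth 0 s i + nth 0 s k = nth 0 s 0.
Proof.
elim: k => [|k IH] H; first by rewrite big_geq.
rewrite big_nat_recr //= (H k.+1) ?addn0; last by rewrite /= leqnn.
apply: IH => i /andP[Hi Hik]; apply: H; rewrite Hi /=; lia.
Qed.

Lemma term_le_sum s i k : i < k -> nth 0 s i <= \sum_(0 <= i' < k) nth 0 s i'.
Proof.
move=> H; rewrite (@big_cat_nat _ _ _ i) //=; last lia.
rewrite [\sum_(i <= i' < k) _]big_ltn //.
by rewrite addnCA leq_addr.
Qed.

Lemma term_sum s : terminal s -> sumn s = head 0 s.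
Proof.
case: s => //= a t; rewrite /terminal /= => H.
suff -> : sumn t = 0 by rewrite addn0.
by elim: t H => //= b t IH /andP[/eqP -> ] /IH.
Qed.

Lemma pw_le N M : size N = size M -> (forall i, nth 0 N i <= nth 0 M i) ->
  invlex_le N M.
Proof.
elim: N M => [|a N IH] [|b M] //=; first by left.
move=> [Hs] H.
have [E|[_ [j [Hj Hlt Heq]]]] := IH M Hs (fun i => H i.+1).
  subst M; have := H 0 => /=; rewrite leq_eqVlt => /orP[/eqP->|Hab]; first by left.
  right; split; first by [].
  exists 0; split=> //= i /andP[Hi _]; by case: i Hi.
right; split; first by rewrite /= Hs.
exists j.+1; split=> // -[|i] //= /andP[Hi Hi2]; apply: Heq; apply/andP; split; [exact: Hi | exact: Hi2].
Qed.

Lemma main f : growth f -> forall M N, sumn N <= sumn M -> invlex_le N M ->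
  psi f N <= psi f M.
Proof.
move=> [fmono fge] M; elim/(well_founded_ind invlex_lt_wf): M => M IH N hs [<-|hlt].
  by [].
have [HsNM [j [Hj HNj Habove0]]] := hlt.
have Habove : forall i, j < i -> nth 0 N i = nth 0 M i.
  move=> i Hi; case: (ltnP i (size M)) => HiM; first by apply: Habove0; rewrite Hi HiM.
  by rewrite !nth_default // HsNM.
case hT: (terminal M).
  have Mz : forall i, 0 < i -> nth 0 M i = 0.
    move=> [|i] // _; rewrite -nth_behead.
    case: (ltnP i (size (behead M))) => Hi; last by rewrite nth_default.
    by move/(all_nthP 0): hT => /(_ i Hi) /eqP.
  have j0 : j = 0 by case: j HNj {Hj Habove Habove0} => // j; rewrite Mz.
  subst j.
  have hTN : terminal N.
    by apply/(all_nthP 0) => i Hi; rewrite nth_behead Habove ?Mz.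
  by rewrite (psiE f N) (psiE f M) hT hTN -!term_sum.
have [Hk HMl Hz] := nt_facts M hT.
set k := kM M in Hk HMl Hz.
have HsM := sum_step f M hT.
have HsizeM := size_step f M hT.
have s1 : 1 <= nth 0 M k.+1 by rewrite lt0n.
have sge : nth 0 M k.+1 <= sumn M := nth_le_sumn _ _.
have fs := fge (sumn M).
have Hst : forall i, k.+1 < i -> nth 0 (psi_step f M) i = nth 0 M i.
  move=> i Hi; rewrite nth_step -/k.
  have -> : (i == k.+1) = false by apply/eqP; lia.
  have -> : (i == k) = false by apply/eqP; lia.
  by [].
rewrite (psiE f M) hT.
have lt := psi_step_lt f hT.
case: (ltngtP j k.+1) => Hjk.
- have j0 : j = 0.
    case: j Hjk HNj {Hj Habove Habove0} => // j Hjk; rewrite Hz //; lia.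
  subst j.
  have Hbeh : behead N = behead M.
    apply: (@eq_from_nth _ 0); first by rewrite !size_behead HsNM.
    by move=> i _; rewrite !nth_behead Habove.
  have hTN : terminal N = false by rewrite /terminal Hbeh.
  have HkN : kM N = k by rewrite /kM Hbeh.
  rewrite (psiE f N) hTN.
  apply: IH => //.
    rewrite (sum_step f N hTN) HsM; have := fmono _ _ hs; lia.
  apply: pw_le; first by rewrite !size_step // HsNM.
  have Hle : forall i, nth 0 N i <= nth 0 M i.
    by move=> [|i]; [exact: ltnW HNj | rewrite Habove].
  move=> i; rewrite !nth_step HkN -/k.
  case: ifP => _; first by rewrite Habove.
  case: ifP => _; last exact: Hle.
  have := fmono _ _ hs; have := Hle k; lia.
- apply: IH => //; first by rewrite HsM; lia.
  right; split; first by rewrite HsizeM.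
  exists j; rewrite HsizeM Hst //; split=> // i /andP[Hi _].
  by rewrite Hst ?Habove //; lia.
- subst j.
  apply: IH => //; first by rewrite HsM; lia.
  case: (ltnP (nth 0 N k.+1) (nth 0 M k.+1).-1) => H1.
    right; split; first by rewrite HsizeM.
    exists k.+1; rewrite HsizeM nth_step -/k eqxx; split=> // i /andP[Hi _].
    by rewrite Hst ?Habove.
  have EN1 : nth 0 N k.+1 = (nth 0 M k.+1).-1 by lia.
  have Hsk : nth 0 (psi_step f M) k.+1 = (nth 0 M k.+1).-1.
    by rewrite nth_step -/k eqxx.
  have Hsk0 : nth 0 (psi_step f M) k = nth 0 M k + f (sumn M).
    rewrite nth_step -/k eqxx.
    by have -> : (k == k.+1) = false by apply/eqP; lia.
  case: (ltnP (nth 0 N k) (nth 0 M k + f (sumn M))) => H2.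
    right; split; first by rewrite HsizeM.
    exists k; rewrite HsizeM Hsk0; split=> //; first lia.
    move=> i /andP[Hi _].
    have [->|Hi1] : i = k.+1 \/ k.+1 < i by lia.
      by rewrite Hsk EN1.
    by rewrite Hst ?Habove.
  have eN := split3 N k (eq_ind_r (fun x => k.+1 < x) Hk HsNM).
  have eM := split3 M k Hk.
  have zM := sum_zeros M k Hz.
  have Rq : \sum_(k.+2 <= i < size N) nth 0 N i = \sum_(k.+2 <= i < size M) nth 0 M i.
    rewrite HsNM; apply: eq_big_nat => i /andP[Hi1 _]; exact: Habove.
  set A := \sum_(0 <= i < k) nth 0 N i in eN.
  set RN := \sum_(k.+2 <= i < size N) nth 0 N i in eN Rq.
  set RM := \sum_(k.+2 <= i < size M) nth 0 M i in eM Rq.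
  set BM := \sum_(0 <= i < k) nth 0 M i in eM zM.
  have HA : A + nth 0 N k <= nth 0 M 0 + 1 by lia.
  have HM0 : nth 0 M 0 + 1 <= sumn M by lia.
  apply: pw_le; first by rewrite HsizeM.
  move=> i; have [Hik|Hik|->] := ltngtP i k.
  + have := @term_le_sum N i k Hik; rewrite -/A => Hi.
    have -> : nth 0 N i = 0 by lia.
    by [].
  + have [->|Hi1] : i = k.+1 \/ k.+1 < i by lia.
      by rewrite Hsk EN1.
    by rewrite Hst ?Habove.
  + rewrite Hsk0; lia.
Qed.

Theorem proposition3p13 (f : nat -> nat) (d : nat) (N M : seq nat) :
  growth f -> 0 < d -> size N = d -> size M = d ->
  sumn N <= sumn M -> invlex_le N M ->
  psi f N <= psi f M.
Proof. by move=> gf _ _ _ hs hl; apply: main. Qed.
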